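(* Let $S_{\rm tr}, S_1,\dots,S_m$ be the output of Algorithm 2 (defined in the context) and set $\gamma := \sum_{i=1}^m f_i(S_i)$. If every $f_i$ is monotone and submodular, then $$\sum_{i=1}^m f_i(S_{\rm tr}\cup S_i)\;\ge\;\max\Bigl\{\gamma,\;(1-1/e)(\mathrm{OPT}-2\gamma)+\gamma\Bigr\}.$$ Consequently $\sum_{i=1}^m f_i(S_{\rm tr}\cup S_i)\ge \tfrac12\,\mathrm{OPT}$ for every value of $\gamma$.
   Context: $V$ is a finite ground set with $|V|=n$; $k,l$ are integers with $1\le l<k\le n$. For $i=1,\dots,m$, $f_i:2^V\to\mathbb{R}_{\ge 0}$ is a set function; $f_i$ is monotone if $A\subseteq B\Rightarrow f_i(A)\le f_i(B)$ and submodular if $f_i(A)+f_i(B)\ge f_i(A\cup B)+f_i(A\cap B)$ for all $A,B\subseteq V$. Write $\Delta_i(e\mid S)=f_i(S\cup\{e\})-f_i(S)$. Define $$\mathrm{OPT}=\max_{S_{\rm tr}\subseteq V,\,|S_{\rm tr}|\le l}\;\sum_{i=1}^m\;\max_{S_i\subseteq V,\,|S_i|\le k-l} f_i(S_{\rm tr}\cup S_i).$$ Algorithm 2: start with $S_{\rm tr}=S_1=\dots=S_m=\emptyset$. Phase 1: for each $i=1,\dots,m$ and $t=1,\dots,k-l$, choose $e_i^*\in\arg\max_{e\in V\setminus S_i}\Delta_i(e\mid S_i)$ and set $S_i\leftarrow S_i\cup\{e_i^*\}$. Phase 2: for $t=1,\dots,l$, choose $e^*\in\arg\max_{e\in V\setminus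 S_{\rm tr}}\sum_{i=1}^m\Delta_i(e\mid S_{\rm tr}\cup S_i)$ and set $S_{\rm tr}\leftarrow S_{\rm tr}\cup\{e^*\}$. Output $S_{\rm tr},S_1,\dots,S_m$. Ties in all argmax's are broken arbitrarily. *)

(* Defs.v *)
From mathcomp Require Import all_boot all_order all_algebra.
From mathcomp Require Import reals sequences.
Set Implicit Arguments. Unset Strict Implicit. Unset Printing Implicit Defensive.
Import Order.TTheory GRing.Theory Num.Theory.
Local Open Scope ring_scope.

Section Defs.
Variables (R : realType) (V : finType).

Definition monotone_fn (f : {set V} -> R) : Prop :=
  forall A B : {set V}, A \subset B -> f A <= f B.

Definition submodular_fn (f : {set V} -> R) : Prop :=
  forall A B : {set V}, f (A :|: B) + f (A :&: B) <= f A + f B.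

Definition gain (f : {set V} -> R) (e : V) (S : {set V}) : R := f (e |: S) - f S.

Definition greedy_step (g : {set V} -> R) (A B : {set V}) : Prop :=
  exists2 e, e \notin A &
    B = e |: A /\ (forall x, x \notin A -> gain g x A <= gain g e A).

Definition greedy_output (g : {set V} -> R) (T : nat) (S : {set V}) : Prop :=
  exists A : nat -> {set V},
    [/\ A 0%N = set0, (forall t, (t < T)%N -> greedy_step g (A t) (A t.+1)) & A T = S].

(* Maxima over nonempty finite families of nonnegative reals, computed with
   Num.max and neutral element 0 (harmless since f_i >= 0 and the empty set
   is always admissible). *)
Definition OPT (m : nat) (f : 'I_m -> {set V} -> R) (k l : nat) : R :=
  \big[Num.max/0]_(Str : {set V} | (#|Str| <= l)%N)
    \sum_(i < m) \big[Num.max/0]_(Si : {set V} | (#|Si| <= k - l)%N) f i (Str :|: Si).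

End Defs.

(* Main.v *)
Require Import Defs.
From mathcomp Require Import all_boot all_order all_algebra.
From mathcomp Require Import reals sequences.
From mathcomp Require Import exp lra zify.
Import Order.TTheory GRing.Theory Num.Theory.
Local Open Scope ring_scope.
Section Gen.
Variables (R : realType) (V : finType) (h : {set V} -> R).
Hypotheses (hm : monotone_fn h) (hs : submodular_fn h).

Lemma gain_ge0 e (A : {set V}) : 0 <= gain h e A.
Proof. by rewrite /gain subr_ge0; apply: hm; apply: subsetUr. Qed.

Lemma gain_dec e (A B : {set V}) : A \subset B -> gain h e B <= gain h e A.
Proof.
move=> AB; have := hs (e |: A) B.
have -> : (e |: A) :|: B = e |: B by rewrite -setUA (setUidPr AB).
have H : h A <= h ((e |: A) :&: B) by apply: hm; rewrite subsetI subsetUr AB.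
rewrite /gain => H2; lra.
Qed.

Lemma gain_in e (A : {set V}) : e \in A -> gain h e A = 0.
Proof. by move=> eA; rewrite /gain (setUidPr _) ?subrr // sub1set. Qed.

Lemma sum_bound (s : seq V) (A : {set V}) :
  h (A :|: [set:: s]) <= h A + \sum_(e <- s) gain h e A.
Proof.
elim: s => [|e s IH]; first by rewrite set_nil setU0 big_nil addr0.
rewrite set_cons setUCA big_cons.
have := @gain_dec e _ _ (subsetUl A [set:: s]); rewrite /gain in IH * => H; lra.
Qed.

Lemma sum_bound_set (X A : {set V}) c : (forall e, e \in X -> gain h e A <= c) ->
  h (A :|: X) <= h A + c *+ #|X|.
Proof.
move=> H; have := sum_bound (enum X) A; rewrite set_enum big_enum /= => H1.
apply: le_trans H1 _; rewrite lerD2l -sumr_const; exact: ler_sum.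
Qed.

Lemma chain (A : nat -> {set V}) T :
  (forall t, (t < T)%N -> A t \subset A t.+1) ->
  forall t, (t <= T)%N -> A t \subset A T.
Proof.
move=> H t tT.
have G : forall d u, (d + u <= T)%N -> A u \subset A (d + u)%N.
  elim=> [|d IH] u duT; first by rewrite add0n.
  apply: subset_trans (H u _) _; first lia.
  rewrite addSnnS; apply: IH; lia.
have := G (T - t)%N t; rewrite subnK //; apply; lia.
Qed.

Lemma phase1_bound T S (hT : (0 < T)%N) (h0 : forall A, 0 <= h A) :
  greedy_output h T S -> forall (B S' : {set V}), S \subset B ->
  (#|S'| <= T)%N -> h (B :|: S') <= h B + h S.
Proof.
case=> A [A0 Hst AT] B S' SB cS'.
have sub : forall t, (t <= T)%N -> A t \subset B.
  have Hc : forall u, (u < T)%N -> A u \subset A u.+1.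
    by move=> u uT; have [e' _ [-> _]] := Hst u uT; exact: subsetUr.
  by move=> t tT; apply: subset_trans (@chain A T Hc t tT) _; rewrite AT.
have key : forall t, (t < T)%N ->
    h (B :|: S') - h B <= (h (A t.+1) - h (A t)) *+ T.
  move=> t tT; have [e' e'n [At1 Hmax]] := Hst t tT.
  have dge : 0 <= h (A t.+1) - h (A t) by rewrite At1; exact: gain_ge0.
  have H := @sum_bound_set S' B (h (A t.+1) - h (A t)).
  have H2 : h (B :|: S') <= h B + (h (A t.+1) - h (A t)) *+ #|S'|.
    apply: H => e eS'; case: (boolP (e \in B)) => eB; first by rewrite gain_in.
    apply: le_trans (@gain_dec e _ _ (sub t (ltnW tT))) _; rewrite At1; apply: Hmax.
    by apply: contra eB; exact: (subsetP (sub t (ltnW tT))).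
  have H3 : (h (A t.+1) - h (A t)) *+ #|S'| <= (h (A t.+1) - h (A t)) *+ T.
    by rewrite -[_ *+ #|S'|]mulr_natl -[_ *+ T]mulr_natl ler_wpM2r // ler_nat.
  lra.
have E1 : (h (B :|: S') - h B) *+ T = \sum_(0 <= t < T) (h (B :|: S') - h B).
  by rewrite sumr_const_nat subn0.
have E2 : (h (A T) - h (A 0)) *+ T = \sum_(0 <= t < T) ((h (A t.+1) - h (A t)) *+ T).
  by rewrite sumrMnl telescope_sumr.
have S1 : (h (B :|: S') - h B) *+ T <= (h (A T) - h (A 0)) *+ T.
  by rewrite E1 E2; apply: ler_sum_nat => t /andP[_ tT]; exact: key.
rewrite lerMn2r in S1; case/orP: S1 => [/eqP T0|S1]; first by rewrite T0 in hT.
have := h0 set0; rewrite AT A0 in S1; lra.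
Qed.

Lemma phase2_bound T S (hT : (0 < T)%N) : greedy_output h T S ->
  forall X : {set V}, (#|X| <= T)%N ->
  (1 - (expR 1)^-1) * (h X - h set0) <= h S - h set0.
Proof.
case=> A [A0 Hst AT] X cX.
set x := (T%:R : R); have xpos : 0 < x by rewrite ltr0n.
set q := 1 - x^-1.
have q0 : 0 <= q by rewrite subr_ge0 invf_le1 // ler1n.
have key : forall t, (t < T)%N -> h X - h (A t.+1) <= q * (h X - h (A t)).
  move=> t tT; have [e' e'n [At1 Hmax]] := Hst t tT.
  have dge : 0 <= h (A t.+1) - h (A t) by rewrite At1; exact: gain_ge0.
  have H1 : h X <= h (A t :|: X) by apply: hm; exact: subsetUr.
  have H := @sum_bound_set X (A t) (h (A t.+1) - h (A t)).
  have H2 : h (A t :|: X) <= h (A t) + (h (A t.+1) - h (A t)) *+ #|X|.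
    apply: H => e eX; case: (boolP (e \in A t)) => eA; first by rewrite gain_in.
    by rewrite At1; apply: Hmax.
  have H3 : (h (A t.+1) - h (A t)) *+ #|X| <= x * (h (A t.+1) - h (A t)).
    by rewrite -mulr_natl ler_wpM2r // ler_nat.
  have E : x * (q * (h X - h (A t))) = x * (h X - h (A t)) - (h X - h (A t)).
    by rewrite /q mulrBl mul1r mulrBr mulrA mulfV ?lt0r_neq0 // mul1r.
  rewrite -(ler_pM2l xpos) E; rewrite !mulrBr in H3 *; lra.
have ind : forall t, (t <= T)%N -> h X - h (A t) <= q ^+ t * (h X - h (A 0)).
  elim=> [|t IH] tT; first by rewrite expr0 mul1r.
  apply: le_trans (key t tT) _; rewrite exprS -mulrA; apply: ler_wpM2l => //; exact: IH (ltnW tT).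
have qT : q ^+ T <= (expR 1)^-1.
  have qe : q <= expR (- x^-1) by exact: expR_ge1Dx.
  apply: le_trans (lerXn2r T _ _ qe) _; rewrite ?nnegrE ?expR_ge0 //.
  by rewrite -expRM_natl mulrN mulfV ?lt0r_neq0 // expRN.
have D0 : 0 <= h X - h (A 0) by rewrite A0 subr_ge0; apply: hm; exact: sub0set.
have F := ind T (leqnn T).
have G : q ^+ T * (h X - h (A 0)) <= (expR 1)^-1 * (h X - h (A 0)) by apply: ler_wpM2r.
rewrite AT A0 in F G; lra.
Qed.

End Gen.

Theorem proposition2 (R : realType) (V : finType) (m k l : nat)
  (f : 'I_m -> {set V} -> R)
  (hl : (1 <= l)%N) (hlk : (l < k)%N) (hkn : (k <= #|V|)%N)
  (f_ge0 : forall i A, 0 <= f i A)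
  (f_mono : forall i, monotone_fn (f i))
  (f_sub : forall i, submodular_fn (f i))
  (Str : {set V}) (S : 'I_m -> {set V})
  (phase1 : forall i, greedy_output (f i) (k - l) (S i))
  (phase2 : greedy_output (fun X => \sum_(i < m) f i (X :|: S i)) l Str) :
  let gamma := \sum_(i < m) f i (S i) in
  let val := \sum_(i < m) f i (Str :|: S i) in
  Num.max gamma ((1 - (expR 1)^-1) * (OPT f k l - 2 * gamma) + gamma) <= val
  /\ OPT f k l / 2 <= val.
Proof.
move=> gamma val.
pose g := fun X : {set V} => \sum_(i < m) f i (X :|: S i).
have gm : monotone_fn g.
  by move=> A B AB; apply: ler_sum => i _; apply: f_mono; exact: setSU.
have gs : submodular_fn g.
  move=> A B; rewrite /g -!big_split /=; apply: ler_sum => i _.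
  have E1 : (A :|: B) :|: S i = (A :|: S i) :|: (B :|: S i).
    by apply/setP => x; rewrite !inE; case: (x \in A); case: (x \in B); case: (x \in S i).
  rewrite E1 setUIl; exact: f_sub.
have g0 : g set0 = gamma by rewrite /g /gamma; apply: eq_bigr => i _; rewrite set0U.
have P2 := @phase2_bound _ _ g gm gs _ _ hl phase2.
have gS : g Str = val by [].
rewrite -/g g0 gS in P2.
have P1 : forall i (X S' : {set V}), (#|S'| <= k - l)%N ->
    f i (X :|: S') <= f i (X :|: S i) + f i (S i).
  move=> i X S' cS.
  have kl : (0 < k - l)%N by rewrite subn_gt0.
  have H := @phase1_bound _ _ (f i) (f_mono i) (f_sub i) _ _ kl (f_ge0 i) (phase1 i) _ _ (subsetUr X (S i)) cS.
  apply: le_trans H; apply: f_mono; apply: setSU; exact: subsetUl.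
have hE : 2 <= expR 1 :> R by have := expR_ge1Dx (1:R); lra.
have Ei0 : 0 <= (expR 1)^-1 :> R by rewrite invr_ge0 expR_ge0.
have hEi : (expR 1)^-1 * expR 1 = 1 :> R.
  by rewrite mulVf // gt_eqF // (lt_le_trans _ hE).
have chalf : 1/2 <= 1 - (expR 1)^-1 :> R.
  have := mulr_ge0 Ei0 (_ : 0 <= expR 1 - 2); rewrite ?subr_ge0 // mulrBr hEi.
  move=> H; have := H hE; lra.
have c0 : 0 <= 1 - (expR 1)^-1 :> R by lra.
have gamma0 : 0 <= gamma by apply: sumr_ge0 => i _; exact: f_ge0.
have vg : gamma <= val by apply: ler_sum => i _; apply: f_mono; exact: subsetUr.
have OB : (1 - (expR 1)^-1) * OPT f k l <= val - gamma + 2 * (1 - (expR 1)^-1) * gamma.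
  rewrite /OPT; apply: (big_ind (fun y => (1 - (expR 1)^-1) * y <= val - gamma + 2 * (1 - (expR 1)^-1) * gamma)).
  - rewrite mulr0; have := mulr_ge0 c0 gamma0; lra.
  - by move=> a b Ha Hb; rewrite maxEle; case: ifP.
  - move=> X cX.
    have inner : forall i, \big[Num.max/0]_(Si : {set V} | (#|Si| <= k - l)%N) f i (X :|: Si)
        <= f i (X :|: S i) + f i (S i).
      move=> i; apply: (big_ind (fun y => y <= f i (X :|: S i) + f i (S i))).
      + by apply: addr_ge0.
      + by move=> a b Ha Hb; rewrite maxEle; case: ifP.
      + move=> Si cSi; exact: P1.
    have sum1 : \sum_(i < m) \big[Num.max/0]_(Si : {set V} | (#|Si| <= k - l)%N) f i (X :|: Si)
        <= g X + gamma by rewrite /g /gamma -big_split; apply: ler_sum => i _; exact: inner.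
    have H := P2 X cX.
    have H' := ler_wpM2l c0 sum1.
    rewrite mulrDr in H'; rewrite mulrBr in H; lra.
split.
- rewrite ge_max; apply/andP; split => //; rewrite mulrBr; lra.
- case: (lerP (OPT f k l) (2 * gamma)) => H; first lra.
  have := mulr_ge0 (_ : 0 <= 1 - (expR 1)^-1 - 1/2) (_ : 0 <= OPT f k l - 2 * gamma).
  rewrite subr_ge0 chalf subr_ge0 ltW // => /(_ isT isT) HH.
  rewrite mulrBl !mulrBr in HH; lra.
Qed.
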